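(* Let $R$ be an exchange ring and $\alpha=[a_1\ a_2\ \cdots\ a_n]$ a right unimodular row over $R$ (i.e. $a_1R+\cdots+a_nR=R$). Then $\alpha$ can be transformed by a finite sequence of elementary column operations to a row $[b_1\ b_2\ \cdots\ b_n]$ such that $R=b_1R\oplus\cdots\oplus b_nR$ and $b_i\in a_iRa_i$ for each $i$.
   Context: All rings are unital. A ring $R$ is an exchange ring if for every $a\in R$ there is an idempotent $e\in aR$ with $1-e\in(1-a)R$ (equivalently, $R_R$ has the finite exchange property). An elementary column operation on a row $[c_1\ \cdots\ c_n]$ replaces some entry $c_i$ by $c_i+c_jr$ for some $j\neq i$ and $r\in R$ (right multiplication of the $1\times n$ matrix by a transvection $I+re_{ji}$). *)

(* Defs.v *)
From HB Require Import structures.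
From mathcomp Require Import all_boot all_algebra.
Set Implicit Arguments. Unset Strict Implicit. Unset Printing Implicit Defensive.
Import GRing.Theory.
Local Open Scope ring_scope.

(* Rings are unital, possibly non-commutative (pzRingType allows the zero ring). *)

Definition in_rideal (R : pzRingType) (a x : R) : Prop := exists r : R, x = a * r.

Definition exchange_ring (R : pzRingType) : Prop :=
  forall a : R, exists e : R, e * e = e /\ in_rideal a e /\ in_rideal (1 - a) (1 - e).

Definition right_unimodular (R : pzRingType) (n : nat) (a : 'I_n -> R) : Prop :=
  exists x : 'I_n -> R, \sum_(i < n) a i * x i = 1.

Definition elem_col_op (R : pzRingType) (n : nat) (c d : 'I_n -> R) : Prop :=
  exists (i j : 'I_n) (r : R), i != j /\
    forall k, d k = (if k == i then c i + c j * r else c k).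

Inductive col_reach (R : pzRingType) (n : nat) : ('I_n -> R) -> ('I_n -> R) -> Prop :=
| col_reach_refl c : col_reach c c
| col_reach_step c d e : elem_col_op c d -> col_reach d e -> col_reach c e.

Definition rdirect_sum_decomp (R : pzRingType) (n : nat) (b : 'I_n -> R) : Prop :=
  (forall y : R, exists x : 'I_n -> R, \sum_(i < n) b i * x i = y) /\
  (forall x : 'I_n -> R, \sum_(i < n) b i * x i = 0 -> forall i, b i * x i = 0).

(* Main.v *)
Require Import Defs.
From HB Require Import structures.
From mathcomp Require Import all_boot all_algebra.
Set Implicit Arguments. Unset Strict Implicit. Unset Printing Implicit Defensive.
Import GRing.Theory.
Local Open Scope ring_scope.
From Stdlib Require Import FunctionalExtensionality.

Lemma sum_delta (R : pzRingType) n (j : 'I_n) (F : 'I_n -> R) :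
  \sum_(k < n) (if k == j then F k else 0) = F j.
Proof.
rewrite (bigD1 j) //= eqxx big1 ?addr0 // => k /negbTE -> //.
Qed.

Lemma sum_delta' (R : pzRingType) n (j : 'I_n) (F : 'I_n -> R) :
  \sum_(k < n) (if j == k then F k else 0) = F j.
Proof.
rewrite -(sum_delta j F); apply: eq_bigr => k _; by rewrite eq_sym.
Qed.

Lemma corner_exch (R : pzRingType) : exchange_ring R -> forall f a : R,
  f * f = f -> a = f * a * f ->
  exists h r t, [/\ h * h = h, h = f * h * f, h = a * r & f - h = (f - a) * t].
Proof.
move=> ex f a ff af.
have [F [FF [[r Fr] [t Ft]]]] := ex a.
have fa : f * a = a by rewrite {1}af !mulrA ff -af.
have fF : f * F = F by rewrite Fr mulrA fa.
exists (F * f), (r * f), (t * f); split.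
- by rewrite mulrA -(mulrA F f F) fF FF.
- by rewrite !mulrA fF -mulrA ff.
- by rewrite Fr mulrA.
- have -> : f - F * f = f * ((1 - F) * f) by rewrite mulrBl mul1r mulrBr ff mulrA fF.
  by rewrite Ft !mulrA mulrBr mulr1 fa.
Qed.

Lemma idem_l (R : pzRingType) (f x : R) : f * f = f -> x = f * x * f -> f * x = x.
Proof. by move=> ff xf; rewrite {1}xf !mulrA ff -xf. Qed.
Lemma idem_r (R : pzRingType) (f x : R) : f * f = f -> x = f * x * f -> x * f = x.
Proof. by move=> ff xf; rewrite {1}xf -mulrA ff -xf. Qed.

Lemma orth_decomp (R : pzRingType) : exchange_ring R -> forall n (f : R) (c : 'I_n -> R),
  f * f = f -> (forall i, c i = f * c i * f) -> \sum_(i < n) c i = f ->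
  exists s : 'I_n -> R,
    (forall i j, (c i * s i) * (c j * s j) = if i == j then c i * s i else 0)
    /\ \sum_(i < n) c i * s i = f.
Proof.
move=> ex; elim=> [|n IH] f c ff cf sc.
  exists (fun _ => 0); split; first by case.
  by rewrite big_ord0 -sc big_ord0.
rewrite big_ord_recl in sc.
have [h [r [t [hh hf hr ht]]]] := corner_exch ex ff (cf ord0).
set f' := f - h.
have fh : f * h = h by apply: idem_l.
have hf' : h * f = h by apply: idem_r.
have f'f' : f' * f' = f' by rewrite /f' mulrBl !mulrBr ff fh hf' hh subrr subr0.
have ff' : f * f' = f' by rewrite /f' mulrBr ff fh.
have f'f : f' * f = f' by rewrite /f' mulrBl ff hf'.
have hf'sum : h + f' = f by rewrite /f' addrC subrK.
have [c' c'E] : exists c' : 'I_n -> R, forall j, c' j = f' * c (lift ord0 j) * t * f'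
  by exists (fun j => f' * c (lift ord0 j) * t * f').
have c'f : forall j, c' j = f' * c' j * f'.
  move=> j; rewrite c'E !mulrA f'f' -!mulrA f'f'; done.
have sc' : \sum_(i < n) c (lift ord0 i) = f - c ord0 by rewrite -sc addrC addKr.
have c'sum : \sum_(i < n) c' i = f'.
  under eq_bigr do rewrite c'E.
  rewrite -mulr_suml -mulr_suml -mulr_sumr sc' -(mulrA f') -ht.
  by rewrite -/f' f'f' f'f'.
have [s [gorth gsum]] := IH f' c' f'f' c'f c'sum.
have [g gE] : exists g : 'I_n -> R, forall j, g j = c' j * s j by exists (fun j => c' j * s j).
have [w wE] : exists w : 'I_n -> R, forall j, w j = t * f' * s j by exists (fun j => t * f' * s j).
have gdef : forall j, g j = f' * c (lift ord0 j) * w j.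
  by move=> j; rewrite gE c'E wE !mulrA.
have gorth' : forall i j, g i * g j = if i == j then g i else 0.
  by move=> i j; rewrite !gE gorth.
have gsum' : \sum_(i < n) g i = f'.
  by under eq_bigr do rewrite gE.
have gf' : forall j, g j * f' = g j.
  move=> j; rewrite -{1}gsum' mulr_sumr.
  under eq_bigr do rewrite gorth'.
  by rewrite sum_delta'.
have fc : forall j, f * c (lift ord0 j) = c (lift ord0 j) by move=> j; apply: idem_l.
have [p' pE] : exists p' : 'I_n -> R, forall j, p' j = c (lift ord0 j) * (w j * g j)
  by exists (fun j => c (lift ord0 j) * (w j * g j)).
have gp : forall i j, g i * p' j = if i == j then g i else 0.
  move=> i j; rewrite pE -{1}(gf' i) -mulrA (mulrA f') (mulrA (f' * _)) -(gdef j).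
  by rewrite gorth' eqxx gorth'.
have pp : forall i j, p' i * p' j = if i == j then p' i else 0.
  move=> i j.
  have -> : p' i * p' j = c (lift ord0 i) * (w i * (g i * p' j)) by rewrite pE !mulrA.
  rewrite gp pE; case: (i == j) => //; by rewrite !mulr0.
have fp : forall i, f' * p' i = g i.
  by move=> i; rewrite pE (mulrA f') (mulrA (f' * _)) -gdef gorth' eqxx.
have pf' : forall i, p' i * f' = p' i by move=> i; rewrite pE -!mulrA gf'.
have pf : forall i, p' i * f = p' i by move=> i; rewrite -{1}pf' -mulrA f'f pf'.
have fp' : forall i, f * p' i = p' i by move=> i; rewrite pE mulrA fc.
have [P PE] : exists P, P = \sum_(i < n) p' i by exists (\sum_(i < n) p' i).
have PPr : forall i, p' i * P = p' i.
  move=> i; rewrite PE mulr_sumr; under eq_bigr do rewrite pp; by rewrite sum_delta'.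
have PPl : forall j, P * p' j = p' j.
  move=> j; rewrite PE mulr_suml; under eq_bigr do rewrite pp; by rewrite sum_delta.
have PPP : P * P = P by rewrite {1 3}PE mulr_suml; under eq_bigr do rewrite PPr.
have f'P : f' * P = f' by rewrite PE mulr_sumr; under eq_bigr do rewrite fp.
have Pf : P * f = P by rewrite PE mulr_suml; under eq_bigr do rewrite pf.
have fP : f * P = P by rewrite PE mulr_sumr; under eq_bigr do rewrite fp'.
have h'def : c ord0 * (r * (f - P)) = f - P.
  rewrite mulrA -hr.
  have e1 : f - P = f * (f - P) by rewrite mulrBr ff fP.
  rewrite {2}e1 -{2}hf'sum mulrDl.
  by rewrite (mulrBr f') f'f f'P subrr addr0.
pose sn := fun i : 'I_n.+1 => match unlift ord0 i with Some j => w j * g j | None => r * (f - P) end.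
have sl : forall j, c (lift ord0 j) * sn (lift ord0 j) = p' j by move=> j; rewrite /sn liftK pE.
have s0 : c ord0 * sn ord0 = f - P by rewrite /sn unlift_none h'def.
exists sn; split.
  move=> i j.
  case: (unliftP ord0 i) => [i' ->|->]; case: (unliftP ord0 j) => [j' ->|->].
  - by rewrite !sl pp (inj_eq (@lift_inj _ ord0)).
  - by rewrite sl s0 eq_sym (negbTE (neq_lift _ _)) mulrBr pf PPr subrr.
  - by rewrite sl s0 (negbTE (neq_lift _ _)) mulrBl fp' PPl subrr.
  - rewrite s0 eqxx mulrBl !mulrBr ff fP Pf PPP subrr subr0 //.
rewrite big_ord_recl s0.
under eq_bigr do rewrite sl.
by rewrite -PE subrK.
Qed.

Lemma col_reach_trans (R : pzRingType) n (c d e : 'I_n -> R) :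
  col_reach c d -> col_reach d e -> col_reach c e.
Proof.
elim=> [//|c1 d1 e1 st _ IH] H; apply: col_reach_step st (IH H).
Qed.

Lemma col_add_seq (R : pzRingType) n (i : 'I_n) (r : 'I_n -> R) (s : seq 'I_n) :
  forall c, i \notin s ->
  col_reach c (fun k => if k == i then c i + \sum_(j <- s) c j * r j else c k).
Proof.
elim: s => [|j s IH] c Hi.
  have -> : (fun k => if k == i then c i + \sum_(j <- [::]) c j * r j else c k) = c.
    by apply: functional_extensionality => k; rewrite big_nil addr0; case: eqP => // ->.
  exact: col_reach_refl.
rewrite in_cons negb_or in Hi; case/andP: Hi => ij Hs.
pose d := fun k => if k == i then c i + c j * r j else c k.
have st : elem_col_op c d by exists i, j, (r j); split.
apply: col_reach_step st _.
have -> : (fun k => if k == i then c i + \sum_(j0 <- j :: s) c j0 * r j0 else c k)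
   = (fun k => if k == i then d i + \sum_(j0 <- s) d j0 * r j0 else d k).
  apply: functional_extensionality => k; rewrite /d eqxx big_cons addrA.
  case: (k == i) => //; congr (_ + _); apply: eq_big_seq => l ls.
  have -> : (l == i) = false by apply/negbTE; apply: contraNneq Hs => <-.
  done.
exact: IH.
Qed.

Theorem lemma2p4 (R : pzRingType) (n : nat) (a : 'I_n -> R) :
  exchange_ring R -> right_unimodular a ->
  exists b : 'I_n -> R,
    col_reach a b /\ rdirect_sum_decomp b /\
    (forall i, exists r : R, b i = a i * r * a i).
Proof.
move=> ex [x hx].
have [s [orth ssum]] := @orth_decomp R ex n 1 (fun i => a i * x i) (mulr1 1)
   (fun i => esym (etrans (congr1 (fun z => z * 1) (mul1r _)) (mulr1 _))) hx.
move: orth ssum => /= orth ssum.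
have [E EE] : exists E : 'I_n -> R, forall i, E i = a i * (x i * s i)
  by exists (fun i => a i * (x i * s i)).
have Eorth : forall i j, E i * E j = if i == j then E i else 0.
  have EE' : forall i, E i = a i * x i * s i by move=> i; rewrite EE mulrA.
  by move=> i j; rewrite !EE' orth.
have Esum : \sum_(i < n) E i = 1.
  by rewrite -ssum; apply: eq_bigr => i _; rewrite EE mulrA.
have EEi : forall i, E i * E i = E i by move=> i; rewrite Eorth eqxx.
exists (fun i => E i * a i); split; last split.
- pose st := fun (k : nat) (i : 'I_n) => if (i < k)%N then E i * a i else a i.
  have key : forall k, (k <= n)%N -> col_reach a (st k).
    elim=> [_|k IH kn].
      have -> : st 0%N = a by apply: functional_extensionality => i; rewrite /st ltn0.
      exact: col_reach_refl.
    apply: col_reach_trans (IH (ltnW kn)) _.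
    pose K := Ordinal kn.
    have Hs : K \notin [seq j <- index_enum 'I_n | j != K].
      by rewrite mem_filter eqxx.
    have := @col_add_seq R n K (fun j => - (x j * s j * a K)) _ (st k) Hs.
    rewrite big_filter.
    have stE : forall j, st k j * (x j * s j) = E j.
      move=> j; rewrite /st; case: (j < k)%N.
        by rewrite -mulrA -EE EEi.
      by rewrite EE.
    have -> : (fun k0 => if k0 == K then st k K +
       \sum_(i <- index_enum 'I_n | i != K) st k i * - (x i * s i * a K) else st k k0)
       = st k.+1.
      apply: functional_extensionality => i.
      case: eqP => [->|ne].
        rewrite /st ltnn ltnSn.
        have -> : \sum_(i <- index_enum 'I_n | i != K) st k i * - (x i * s i * a K)
           = - ((\sum_(i | i != K) E i) * a K).
          rewrite mulr_suml -sumrN; apply: eq_bigr => j _.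
          by rewrite mulrN mulrA stE.
        have : \sum_(i | i != K) E i = 1 - E K.
          by rewrite -Esum [in RHS](bigD1 K) //= addrAC subrr add0r.
        move=> ->; rewrite mulrBl mul1r opprB addrC subrK; done.
      rewrite /st ltnS [in RHS]leq_eqVlt.
      have -> : (i == k :> nat) = false.
        by apply/negbTE; apply/eqP => ik; apply: ne; apply: val_inj.
      done.
    done.
  have -> : (fun i => E i * a i) = st n by apply: functional_extensionality => i; rewrite /st ltn_ord.
  exact: key.
- split.
  + move=> y; exists (fun i => x i * s i * y).
    rewrite -[RHS]mul1r -Esum mulr_suml; apply: eq_bigr => i _.
    have -> : E i * a i * (x i * s i * y) = E i * (a i * (x i * s i)) * y by rewrite !mulrA.
    by rewrite -EE EEi.
  + move=> z hz k.
    have : E k * \sum_(i < n) E i * a i * z i = 0 by rewrite hz mulr0.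
    rewrite mulr_sumr.
    under eq_bigr do rewrite !mulrA Eorth -!mulrA.
    move=> h; rewrite -mulrA.
    have := sum_delta' k (fun i => E i * (a i * z i)); move=> /= <-.
    apply: (etrans _ h); apply: eq_bigr => i _; case: eqP => [<-|_]; last by rewrite mul0r.
    by [].
- by move=> i; exists (x i * s i); rewrite EE mulrA.
Qed.
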